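(* Let $H$ be a monoid such that $\mathcal{P}_{\mathrm{fin},1}(H)$ is UmF. Then: (i) the group of units $H^\times$ of $H$ has order $\le 2$; (ii) $uy=yu=y$ for all $u\in H^\times$ and $y\in H\setminus H^\times$; (iii) $H\setminus H^\times$ is an almost-breakable semigroup.
   Context: $\mathcal{P}_{\mathrm{fin},1}(H)$ denotes the set of non-empty finite subsets of $H$ containing $1_H$, a monoid under $XY=\{xy:x\in X,y\in Y\}$. In a monoid $M$: $x\mid_M y$ iff $y\in MxM$; $x,y$ are associated if each divides the other; proper divisor means divides but not associated. A unit-divisor divides $1_M$; otherwise it is a non-unit-divisor. An irreducible is a non-unit-divisor $a$ with $a\neq xy$ for all non-unit-divisors $x,y$ properly dividing $a$. A factorization of $x$ is a finite word over the irreducibles with product $x$. For words $\mathfrak a,\mathfrak b$, $\mathfrak a\sqsubseteq\mathfrak b$ means $\mathfrak a$ is, up to associatedness of letters, a subword (subsequence) of some permutation of $\mathfrak b$; equivalence means $\sqsubseteq$ both ways. A factorization $\mathfrak a$ of $x$ is minimal if no factorization $\mathfrak b$ of $x$ satisfies $\mathfrak b\sqsubseteq\mathfrak a\not\sqsubseteq\mathfrak b$. $M$ is UmF if every non-unit-divisor has a factorization and any two minimal factorizations of an element are equivalent. A semigroup $S$ is almost-breakable if for all $x,y\in S$, $xy\in\{x,y\}$ or $yx\in\{x,y\}$. *)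

(* Defs.v *)
From Stdlib Require Import List Permutation.
Import ListNotations.

Set Implicit Arguments.

Section MonoidNotions.
Variables (M : Type) (op : M -> M -> M) (e : M).

Definition mdiv (x y : M) : Prop := exists a b, y = op (op a x) b.

Definition massoc (x y : M) : Prop := mdiv x y /\ mdiv y x.

Definition mproper (x y : M) : Prop := mdiv x y /\ ~ massoc x y.

Definition unit_divisor (x : M) : Prop := mdiv x e.

Definition mirreducible (a : M) : Prop :=
  ~ unit_divisor a /\
  forall x y, ~ unit_divisor x -> ~ unit_divisor y ->
    mproper x a -> mproper y a -> a <> op x y.

Definition wprod (w : list M) : M := fold_right op e w.

Definition factorization (w : list M) (x : M) : Prop :=
  Forall mirreducible w /\ wprod w = x.

Inductive subword_assoc : list M -> list M -> Prop :=
| swa_nil : forall l, subword_assoc [] l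
| swa_keep : forall a b l l', massoc a b -> subword_assoc l l' ->
    subword_assoc (a :: l) (b :: l')
| swa_skip : forall b l l', subword_assoc l l' -> subword_assoc l (b :: l').

Definition wsub (a b : list M) : Prop :=
  exists b', Permutation b b' /\ subword_assoc a b'.

Definition wequiv (a b : list M) : Prop := wsub a b /\ wsub b a.

Definition minimal_factorization (a : list M) (x : M) : Prop :=
  factorization a x /\
  ~ (exists b, factorization b x /\ wsub b a /\ ~ wsub a b).

Definition UmF : Prop :=
  (forall x, ~ unit_divisor x -> exists a, factorization a x) /\
  (forall x a b, minimal_factorization a x -> minimal_factorization b x ->
     wequiv a b).

End MonoidNotions.

Section Pfin1.
Variables (H : Type) (op : H -> H -> H) (e : H).

Definition finite_pred (X : H -> Prop) : Prop :=
  exists l : list H, forall x, X x -> In x l.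

Definition Pfin1 : Type := { X : H -> Prop | finite_pred X /\ X e }.

Definition set_mul (X Y : H -> Prop) : H -> Prop :=
  fun z => exists x y, X x /\ Y y /\ z = op x y.

Lemma set_mul_Pfin1 (X Y : H -> Prop) :
  (forall z, z = op e e -> z = e) ->
  finite_pred X /\ X e -> finite_pred Y /\ Y e ->
  finite_pred (set_mul X Y) /\ set_mul X Y e.
Proof.
  intros He [[lx Hx] Xe] [[ly Hy] Ye]; split.
  - exists (flat_map (fun x => map (fun y => op x y) ly) lx).
    intros z (x & y & Xx & Yy & ->).
    apply in_flat_map; exists x; split; [now apply Hx|].
    apply in_map; now apply Hy.
  - exists e, e; repeat split; auto. symmetry; now apply He.
Qed.

(* 1_H * 1_H = 1_H holds in any monoid; we build the product using that *)
Definition Pfin1_mul (Hee : op e e = e) (X Y : Pfin1) : Pfin1 :=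
  exist _ (set_mul (proj1_sig X) (proj1_sig Y))
    (@set_mul_Pfin1 (proj1_sig X) (proj1_sig Y)
       (fun z Hz => eq_trans Hz Hee) (proj2_sig X) (proj2_sig Y)).

Lemma Pfin1_one_prop : finite_pred (fun x => x = e) /\ e = e.
Proof. split; [exists [e]; intros x ->; now left | reflexivity]. Qed.

Definition Pfin1_one : Pfin1 := exist _ (fun x => x = e) Pfin1_one_prop.

Definition is_unit (u : H) : Prop := exists v, op u v = e /\ op v u = e.

Definition almost_breakable_subsemigroup (S : H -> Prop) : Prop :=
  (forall x y, S x -> S y -> S (op x y)) /\
  (forall x y, S x -> S y ->
     (op x y = x \/ op x y = y) \/ (op y x = x \/ op y x = y)).

End Pfin1.

(* Main.v *)
Require Import Defs.
From Stdlib Require Import List Permutation Lia Arith Classical FunctionalExtensionality PropExtensionality ProofIrrelevance.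
Import ListNotations.

Section Words.
Variables (M : Type) (op : M -> M -> M) (e : M).

Lemma swa_len {a b} : subword_assoc op b a -> length b <= length a.
Proof. induction 1; simpl; lia. Qed.

Lemma swa_in {a b} : subword_assoc op b a -> forall c, In c b -> exists d, In d a /\ massoc op c d.
Proof.
  induction 1; simpl; intros c Hc; [contradiction| |].
  - destruct Hc as [<-|Hc]; [exists b; auto|]. destruct (IHsubword_assoc c Hc) as (d&?&?); eauto.
  - destruct (IHsubword_assoc c Hc) as (d&?&?); eauto.
Qed.

Lemma swa_eqlen {a b} : subword_assoc op b a -> length b = length a -> Forall2 (massoc op) b a.
Proof.
  induction 1; simpl; intros Hl.
  - destruct l; [constructor|discriminate].
  - constructor; auto.
  - apply swa_len in H. lia.
Qed.

Lemma F2_swa a b : Forall2 (massoc op) a b -> subword_assoc op a b.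
Proof. induction 1; constructor; auto. Qed.

Lemma wsub_len {a b} : wsub op b a -> length b <= length a.
Proof. intros (a'&Hp&Hs). apply Permutation_length in Hp. apply swa_len in Hs. lia. Qed.

Lemma wsub_in {a b} : wsub op b a -> forall c, In c b -> exists d, In d a /\ massoc op c d.
Proof.
  intros (a'&Hp&Hs) c Hc. destruct (swa_in Hs c Hc) as (d&Hd&Hm).
  exists d; split; auto. apply Permutation_in with a'; auto. now apply Permutation_sym.
Qed.

Lemma wsub_eqlen {a b} : wsub op b a -> length b = length a -> wsub op a b.
Proof.
  intros (a'&Hp&Hs) Hl.
  assert (HF : Forall2 (massoc op) b a').
  { apply swa_eqlen; auto. apply Permutation_length in Hp. lia. }
  assert (HF' : Forall2 (fun x y => massoc op y x) a' b).
  { clear -HF. induction HF; constructor; auto. }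
  destruct (Permutation_Forall2 (Permutation_sym Hp) HF') as (b'&Hb&HF2).
  exists b'; split; auto. apply F2_swa. clear -HF2. induction HF2; constructor; auto.
  destruct H; split; auto.
Qed.

Lemma min_crit {a x} : factorization op e a x ->
  (forall c, length c < length a -> (forall y, In y c -> exists d, In d a /\ massoc op y d) -> wprod op e c <> x) ->
  minimal_factorization op e a x.
Proof.
  intros Hf Hc; split; auto. intros (b&[Hb1 Hb2]&Hs&Hn).
  pose proof (wsub_len Hs).
  destruct (Nat.eq_dec (length b) (length a)).
  - apply Hn, wsub_eqlen; auto.
  - apply (Hc b); auto; [lia|]. now apply wsub_in.
Qed.

Lemma umf_contra {a b x} : UmF op e -> minimal_factorization op e a x -> minimal_factorization op e b x ->
  forall y, In y a -> (forall d, In d b -> ~ massoc op y d) -> False.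
Proof.
  intros [_ HU] Ha Hb y Hy Hn. destruct (HU _ _ _ Ha Hb) as [Hab _].
  destruct (wsub_in Hab y Hy) as (d&?&?). eapply Hn; eauto.
Qed.
End Words.


Section PS.
Variables (H : Type) (op : H -> H -> H) (e : H).
Hypothesis op_assoc : forall x y z, op x (op y z) = op (op x y) z.
Hypothesis op_e_l : forall x, op e x = x.
Hypothesis op_e_r : forall x, op x e = x.

Local Notation P := (Pfin1 e).
Local Notation mul := (Pfin1_mul op (op_e_l e)).
Local Notation one := (Pfin1_one e).

Lemma Peq (X Y : P) : (forall z, proj1_sig X z <-> proj1_sig Y z) -> X = Y.
Proof.
  destruct X as [X HX], Y as [Y HY]; simpl; intros Hz.
  assert (X = Y) by (apply functional_extensionality; intro z; apply propositional_extensionality; auto).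
  subst. f_equal. apply proof_irrelevance.
Qed.

Lemma S_prop (l : list H) : finite_pred (fun z => z = e \/ In z l) /\ (e = e \/ In e l).
Proof. split; [exists (e :: l); intros z [->|Hz]; simpl; auto | now left]. Qed.

Definition S (l : list H) : P := exist _ (fun z => z = e \/ In z l) (S_prop l).

Lemma one_S : one = S [].
Proof. apply Peq; simpl; intuition. Qed.

Lemma mul_one_r X : mul X one = X.
Proof.
  apply Peq; intro z; simpl; split.
  - intros (a&b&Ha&->&->). now rewrite op_e_r.
  - intros Hz. exists z, e. rewrite op_e_r. auto.
Qed.

Lemma mul_one_l X : mul one X = X.
Proof.
  apply Peq; intro z; simpl; split.
  - intros (a&b&->&Hb&->). now rewrite op_e_l.
  - intros Hz. exists e, z. rewrite op_e_l. auto.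
Qed.

Lemma mul_S l1 l2 : mul (S l1) (S l2) = S (flat_map (fun a => map (op a) (e :: l2)) (e :: l1)).
Proof.
  apply Peq; intro z; unfold S, Pfin1_mul, set_mul; cbn [proj1_sig]; split.
  - intros (a&b&Ha&Hb&->). right. apply in_flat_map. exists a; split.
    + destruct Ha as [->|Ha]; simpl; auto.
    + apply in_map. destruct Hb as [->|Hb]; simpl; auto.
  - intros [->|Hz].
    + exists e, e. rewrite op_e_l. auto.
    + apply in_flat_map in Hz as (a&Ha&Hz). apply in_map_iff in Hz as (b&<-&Hb).
      exists a, b. simpl in Ha, Hb. intuition.
Qed.

Lemma S_eq l1 l2 : (forall z, In z l1 -> z = e \/ In z l2) -> (forall z, In z l2 -> z = e \/ In z l1) -> S l1 = S l2.
Proof. intros H1 H2; apply Peq; intro z; simpl; split; intros [->|Hz]; auto. Qed.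

Lemma S_neq l1 l2 z : In z l1 -> z <> e -> ~ In z l2 -> S l1 <> S l2.
Proof.
  intros H1 H2 H3 Heq. apply (f_equal (fun X : P => proj1_sig X z)) in Heq. simpl in Heq.
  assert (Hz : z = e \/ In z l1) by auto. rewrite Heq in Hz. tauto.
Qed.

Lemma div_sub {U V : P} : mdiv (Pfin1_mul op (op_e_l e)) U V -> forall z, proj1_sig U z -> proj1_sig V z.
Proof.
  intros (A&B&->) z Hz. simpl. exists z, e. split; [|split].
  - exists e, z. rewrite op_e_l. destruct (proj2_sig A). auto.
  - destruct (proj2_sig B); auto.
  - now rewrite op_e_r.
Qed.

Lemma massoc_eq (U V : P) : massoc mul U V -> U = V.
Proof. intros [H1 H2]. apply Peq; intro z; split; [apply div_sub|apply div_sub]; auto. Qed.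

Lemma mdiv_refl (U : P) : mdiv mul U U.
Proof. exists one, one. now rewrite mul_one_l, mul_one_r. Qed.

Lemma ud_one (U : P) : unit_divisor mul one U -> U = one.
Proof.
  intros Hd. apply Peq; intro z; split; [apply div_sub; auto|].
  simpl. intros ->. now destruct (proj2_sig U).
Qed.

Lemma one_ud : unit_divisor mul one one.
Proof. apply mdiv_refl. Qed.

Lemma atom1 h : h <> e -> mirreducible mul one (S [h]).
Proof.
  intros Hh; split.
  - intros Hd. apply ud_one in Hd. rewrite one_S in Hd. revert Hd.
    apply (S_neq _ _ h); simpl; tauto.
  - intros U V HU HV [HdU HnU] _ _. apply HnU.
    assert (U = S [h]) as ->; [|split; apply mdiv_refl].
    destruct (classic (proj1_sig U h)) as [Hin|Hnin].
    + apply Peq; intro z; split; [apply div_sub; auto|].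
      simpl. intros [->|[<-|[]]]; auto. now destruct (proj2_sig U).
    + exfalso; apply HU. assert (U = one) as -> by
        (apply Peq; intro z; split; [|simpl; intros ->; now destruct (proj2_sig U)];
         intros Hz; pose proof (div_sub HdU z Hz) as Hz'; simpl in Hz' |- *;
         destruct Hz' as [->|[<-|[]]]; tauto).
      apply one_ud.
Qed.

Lemma atom2 x y : x <> e -> y <> e -> x <> y -> op x x = x -> op y y = y ->
  op x y <> e -> op x y <> x -> op x y <> y -> op y x <> e -> op y x <> x -> op y x <> y ->
  mirreducible mul one (S [x; y]).
Proof.
  intros Hx Hy Hxy Hxx Hyy H1 H2 H3 H4 H5 H6. split.
  - intros Hd. apply ud_one in Hd. rewrite one_S in Hd. revert Hd.
    apply (S_neq _ _ x); simpl; tauto.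
  - assert (Hcl : forall U, ~ unit_divisor mul one U -> mproper mul U (S [x; y]) -> U = S [x] \/ U = S [y]).
    { intros U HU [HdU HnU].
      assert (He : proj1_sig U e) by now destruct (proj2_sig U).
      assert (Hsub := div_sub HdU). simpl in Hsub.
      destruct (classic (proj1_sig U x)) as [Hix|Hnx], (classic (proj1_sig U y)) as [Hiy|Hny].
      - exfalso; apply HnU. assert (U = S [x; y]) as -> ; [|split; apply mdiv_refl].
        apply Peq; intro z; split; [apply Hsub|]. simpl; intros [->|[<-|[<-|[]]]]; auto.
      - left. apply Peq; intro z; split.
        + intros Hz. destruct (Hsub z Hz) as [->|[<-|[<-|[]]]]; simpl; tauto.
        + simpl; intros [->|[<-|[]]]; auto.
      - right. apply Peq; intro z; split.
        + intros Hz. destruct (Hsub z Hz) as [->|[<-|[<-|[]]]]; simpl; tauto.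
        + simpl; intros [->|[<-|[]]]; auto.
      - exfalso; apply HU. assert (U = one) as ->; [|apply one_ud].
        apply Peq; intro z; split; [|simpl; intros ->; auto].
        intros Hz. destruct (Hsub z Hz) as [->|[<-|[<-|[]]]]; simpl; tauto. }
    intros U V HU HV HpU HpV.
    destruct (Hcl U HU HpU) as [->| ->], (Hcl V HV HpV) as [->| ->]; rewrite mul_S; simpl;
      rewrite ?op_e_l, ?op_e_r.
    + apply (S_neq _ _ y); simpl; [tauto|auto|]. intuition congruence.
    + apply not_eq_sym, (S_neq _ _ (op x y)); simpl; [tauto|auto|]. intuition congruence.
    + apply not_eq_sym, (S_neq _ _ (op y x)); simpl; [tauto|auto|]. intuition congruence.
    + apply (S_neq _ _ x); simpl; [tauto|auto|]. intuition congruence.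
Qed.


Lemma wp1 A : wprod mul one [A] = A.
Proof. cbn [wprod fold_right]. apply mul_one_r. Qed.

Lemma min2 A B x : mirreducible mul one A -> mirreducible mul one B -> wprod mul one [A; B] = x ->
  x <> one -> x <> A -> x <> B -> minimal_factorization mul one [A; B] x.
Proof.
  intros HA HB Hx H1 H2 H3. apply min_crit.
  - split; auto.
  - intros c Hl Hin. destruct c as [|c1 [|c2 c]]; simpl in Hl; try lia.
    + cbn. auto.
    + rewrite wp1. destruct (Hin c1) as (d&Hd&Hm); simpl; auto.
      apply massoc_eq in Hm; subst. simpl in Hd. intuition congruence.
Qed.

Lemma min3 A x : mirreducible mul one A -> wprod mul one [A; A; A] = x ->
  x <> one -> x <> A -> x <> mul A A -> minimal_factorization mul one [A; A; A] x.
Proof.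
  intros HA Hx H1 H2 H3. apply min_crit.
  - split; [repeat (apply Forall_cons; [assumption|]); apply Forall_nil | assumption].
  - intros c Hl Hin.
    assert (Hc : forall y, In y c -> y = A).
    { intros y Hy. destruct (Hin y Hy) as (d&Hd&Hm). apply massoc_eq in Hm; subst. simpl in Hd; intuition. }
    destruct c as [|c1 [|c2 [|c3 c]]]; simpl in Hl; try lia.
    + cbn. auto.
    + rewrite wp1. rewrite (Hc c1); simpl; auto.
    + rewrite (Hc c1), (Hc c2); simpl; auto. cbn [wprod fold_right]. now rewrite mul_one_r.
Qed.

Hypothesis HU : UmF mul one.

Lemma contra a b x Y : minimal_factorization mul one a x -> minimal_factorization mul one b x ->
  In Y a -> (forall d, In d b -> Y <> d) -> False.
Proof.
  intros Ha Hb HY Hn. apply (umf_contra _ _ _ HU Ha Hb Y HY).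
  intros d Hd Hm. apply massoc_eq in Hm. now apply (Hn d).
Qed.

Ltac inl := simpl; repeat first [left; solve [reflexivity | assumption | symmetry; assumption] | right].
Ltac notin := let Hin := fresh "Hin" in intro Hin; simpl in Hin;
  repeat (destruct Hin as [Hin|Hin]; [congruence|]); exact Hin.
Ltac neqS w := apply (S_neq _ _ w); [solve [inl] | congruence | notin].
Ltac neqS' w := apply not_eq_sym; neqS w.
Ltac norm := cbn [wprod fold_right]; rewrite ?mul_one_r, ?mul_S; simpl; rewrite ?op_e_l, ?op_e_r.
Ltac memb := intros ?z ?Hz; simpl in Hz;
  repeat (destruct Hz as [<-|Hz]; [rewrite ?op_e_l, ?op_e_r; solve [inl]|]); contradiction.

Lemma sq h : h <> e -> op h h <> e -> op h h <> h -> False.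
Proof.
  intros H1 H2 H3.
  assert (HA := atom1 _ H1). assert (HB := atom1 _ H2).
  destruct (classic (op h (op h h) = e \/ op h (op h h) = h \/ op h (op h h) = op h h)) as [Hc|Hc].
  - assert (Hx : wprod mul one [S [h]; S [h]] = S [e; h; h; op h h]) by (norm; reflexivity).
    assert (Hab : wprod mul one [S [h]; S [op h h]] = S [e; h; h; op h h]).
    { norm. apply S_eq; destruct Hc as [Hc|[Hc|Hc]]; memb. }
    apply (contra [S [h]; S [op h h]] [S [h]; S [h]] (S [e; h; h; op h h]) (S [op h h])).
    + apply min2; auto; [rewrite one_S; neqS h | neqS (op h h) | neqS h].
    + apply min2; auto; [rewrite one_S; neqS h | neqS (op h h) | neqS (op h h)].
    + simpl; auto.
    + simpl. intros d [<-|[<-|[]]]; neqS (op h h).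
  - apply not_or_and in Hc as [Hc1 Hc]. apply not_or_and in Hc as [Hc2 Hc3].
    assert (Hx : wprod mul one [S [h]; S [op h h]] = S [e; op h h; h; op h (op h h)]) by (norm; reflexivity).
    assert (Hab : wprod mul one [S [h]; S [h]; S [h]] = S [e; op h h; h; op h (op h h)]).
    { norm. apply S_eq; memb. }
    apply (contra [S [h]; S [op h h]] [S [h]; S [h]; S [h]] (S [e; op h h; h; op h (op h h)]) (S [op h h])).
    + apply min2; auto; [rewrite one_S; neqS h | neqS (op h h) | neqS h].
    + apply min3; auto; [rewrite one_S; neqS h | neqS (op h h) |].
      rewrite mul_S; simpl; rewrite ?op_e_l, ?op_e_r. neqS (op h (op h h)).
    + simpl; auto.
    + simpl. intros d [<-|[<-|[<-|[]]]]; neqS (op h h).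
Qed.


Lemma min3g A1 A2 A3 x : mirreducible mul one A1 -> mirreducible mul one A2 -> mirreducible mul one A3 ->
  wprod mul one [A1; A2; A3] = x -> x <> one ->
  (forall c, In c [A1; A2; A3] -> x <> c) ->
  (forall c1 c2, In c1 [A1; A2; A3] -> In c2 [A1; A2; A3] -> x <> mul c1 c2) ->
  minimal_factorization mul one [A1; A2; A3] x.
Proof.
  intros HA1 HA2 HA3 Hx H1 H2 H3. apply min_crit.
  - split; [repeat (apply Forall_cons; [assumption|]); apply Forall_nil | assumption].
  - intros c Hl Hin.
    assert (Hc : forall y, In y c -> In y [A1; A2; A3]).
    { intros y Hy. destruct (Hin y Hy) as (d&Hd&Hm). apply massoc_eq in Hm; subst. auto. }
    destruct c as [|c1 [|c2 [|c3 c]]]; simpl in Hl; try lia.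
    + cbn. auto.
    + rewrite wp1. apply not_eq_sym, H2, Hc; simpl; auto.
    + cbn [wprod fold_right]. rewrite mul_one_r. apply not_eq_sym, H3; apply Hc; simpl; auto.
Qed.

Lemma patT a0 b0 : op b0 b0 = e -> a0 <> e -> b0 <> e -> a0 <> b0 -> op a0 b0 <> a0 -> op a0 b0 <> e -> False.
Proof.
  intros Hb H1 H2 H3 H4 H5.
  assert (F : op (op a0 b0) b0 = a0) by (now rewrite <- op_assoc, Hb, op_e_r).
  assert (Hx : wprod mul one [S [a0]; S [b0]] = S [e; b0; a0; op a0 b0]) by (norm; reflexivity).
  assert (Hy : wprod mul one [S [op a0 b0]; S [b0]] = S [e; b0; a0; op a0 b0]) by (norm; apply S_eq; memb).
  apply (contra [S [a0]; S [b0]] [S [op a0 b0]; S [b0]] (S [e; b0; a0; op a0 b0]) (S [a0])).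
  - apply min2; auto using atom1; [rewrite one_S; neqS a0 | neqS b0 | neqS a0].
  - apply min2; auto using atom1; [rewrite one_S; neqS a0 | neqS a0 | neqS a0].
  - simpl; auto.
  - simpl. intros d [<-|[<-|[]]]; neqS a0.
Qed.

Lemma patT' a0 b0 : op b0 b0 = e -> a0 <> e -> b0 <> e -> a0 <> b0 -> op b0 a0 <> a0 -> op b0 a0 <> e -> False.
Proof.
  intros Hb H1 H2 H3 H4 H5.
  assert (F : op b0 (op b0 a0) = a0) by (now rewrite op_assoc, Hb, op_e_l).
  assert (Hx : wprod mul one [S [b0]; S [a0]] = S [e; a0; b0; op b0 a0]) by (norm; reflexivity).
  assert (Hy : wprod mul one [S [b0]; S [op b0 a0]] = S [e; a0; b0; op b0 a0]) by (norm; apply S_eq; memb).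
  apply (contra [S [b0]; S [a0]] [S [b0]; S [op b0 a0]] (S [e; a0; b0; op b0 a0]) (S [a0])).
  - apply min2; auto using atom1; [rewrite one_S; neqS a0 | neqS a0 | neqS b0].
  - apply min2; auto using atom1; [rewrite one_S; neqS a0 | neqS a0 | neqS a0].
  - simpl; auto.
  - simpl. intros d [<-|[<-|[]]]; neqS a0.
Qed.

Lemma patP5 x y : x <> e -> y <> e -> x <> y -> op x x = x -> op y y = y ->
  op x y <> e -> op x y <> x -> op x y <> y -> op y x <> e -> op y x <> x -> op y x <> y -> False.
Proof.
  intros Hx Hy Hxy Hxx Hyy H1 H2 H3 H4 H5 H6.
  assert (HT := atom2 x y Hx Hy Hxy Hxx Hyy H1 H2 H3 H4 H5 H6).
  assert (Ha : wprod mul one [S [y]; S [x]] = S [e; x; y; op y x]) by (norm; reflexivity).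
  assert (Hb : wprod mul one [S [x; y]; S [x]] = S [e; x; y; op y x]) by (norm; apply S_eq; memb).
  apply (contra [S [y]; S [x]] [S [x; y]; S [x]] (S [e; x; y; op y x]) (S [y])).
  - apply min2; auto using atom1; [rewrite one_S; neqS x | neqS x | neqS y].
  - apply min2; auto using atom1; [rewrite one_S; neqS x | neqS (op y x) | neqS y].
  - simpl; auto.
  - simpl. intros d [<-|[<-|[]]]; [neqS' x | neqS y].
Qed.

Lemma patP4 x y : op x y = e -> x <> e -> y <> e -> x <> y -> op x x <> e -> op x x <> x -> op x x <> y ->
  op y x <> op x x -> op y y <> x -> False.
Proof.
  intros Hxy H1 H2 H3 H4 H5 H6 H7 H8.
  assert (F : op (op x x) y = x) by (now rewrite <- op_assoc, Hxy, op_e_r).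
  pose proof (op_e_r x) as E1.
  assert (E2 : op x (op x y) = x) by (now rewrite Hxy, op_e_r).
  assert (Ha : wprod mul one [S [op x x]; S [y]] = S [e; y; op x x; x]) by (norm; apply S_eq; memb).
  assert (Hb : wprod mul one [S [x]; S [x]; S [y]] = S [e; y; op x x; x]) by (norm; apply S_eq; memb).
  apply (contra [S [op x x]; S [y]] [S [x]; S [x]; S [y]] (S [e; y; op x x; x]) (S [op x x])).
  - apply min2; auto using atom1; [rewrite one_S; neqS x | neqS x | neqS x].
  - apply min3g; auto using atom1; [rewrite one_S; neqS x | |].
    + simpl. intros c [<-|[<-|[<-|[]]]]; [neqS y | neqS y | neqS x].
    + simpl. intros c1 c2 [<-|[<-|[<-|[]]]] [<-|[<-|[<-|[]]]]; rewrite mul_S; simpl; rewrite ?op_e_l, ?op_e_r;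
        idtac.
      1,2,4,5: neqS y.
      1,2,3,4: neqS (op x x).
      neqS x.
  - simpl; auto.
  - simpl. intros d [<-|[<-|[<-|[]]]]; neqS (op x x).
Qed.


Lemma unit_e : is_unit op e e.
Proof. exists e. now rewrite op_e_l. Qed.

Lemma lcancel u a b : is_unit op e u -> op u a = op u b -> a = b.
Proof.
  intros (v&H1&H2) Hab. rewrite <- (op_e_l a), <- (op_e_l b), <- H2, <- !op_assoc. now rewrite Hab.
Qed.

Lemma rcancel u a b : is_unit op e u -> op a u = op b u -> a = b.
Proof.
  intros (v&H1&H2) Hab. rewrite <- (op_e_r a), <- (op_e_r b), <- H1, !op_assoc. now rewrite Hab.
Qed.

Lemma nu_ne y : ~ is_unit op e y -> y <> e.
Proof. intros Hy ->. apply Hy, unit_e. Qed.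

Lemma inv2 u : is_unit op e u -> u <> e -> op u u = e.
Proof.
  intros Hu Hne. apply NNPP. intro Hn. apply (sq u); auto.
  intro Hc. apply Hne. apply (lcancel u); auto. now rewrite Hc, op_e_r.
Qed.

Lemma xy1 x y : op x y = e -> ~ is_unit op e x -> False.
Proof.
  intros Hxy Hx.
  assert (Hxe : x <> e) by now apply nu_ne.
  assert (Hye : y <> e) by (intros ->; apply Hxe; now rewrite op_e_r in Hxy).
  assert (Hxy' : x <> y) by (intros <-; apply Hx; exists x; auto).
  assert (Hxx : op x x <> e) by (intro Hc; apply Hx; exists x; auto).
  assert (Hxx2 : op x x <> x).
  { intro Hc. apply Hxe. assert (E : op (op x x) y = op x y) by now rewrite Hc.
    rewrite <- op_assoc, Hxy, op_e_r in E. exact E. }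
  assert (Hxx3 : op x x <> y).
  { intro Hc. apply Hx. exists (op x x). rewrite Hc. split; auto. rewrite <- Hc, <- op_assoc. now rewrite Hc. }
  assert (Hyx : op y x <> op x x).
  { intro Hc. apply Hxy'. assert (op (op y x) y = op (op x x) y) by now rewrite Hc.
    rewrite <- !op_assoc, Hxy, !op_e_r in H0. auto. }
  assert (Hyy : op y y <> x).
  { intro Hc. apply Hx. exists y. split; auto. rewrite <- Hc, op_assoc, Hc. auto. }
  exact (patP4 x y Hxy Hxe Hye Hxy' Hxx Hxx2 Hxx3 Hyx Hyy).
Qed.

Lemma closure x y : ~ is_unit op e x -> ~ is_unit op e y -> ~ is_unit op e (op x y).
Proof.
  intros Hx Hy (w&Hw1&Hw2). apply (xy1 x (op y w)); auto. now rewrite op_assoc.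
Qed.

Lemma main :
  (exists u1 u2 : H, forall u, is_unit op e u -> u = u1 \/ u = u2) /\
  (forall u y, is_unit op e u -> ~ is_unit op e y -> op u y = y /\ op y u = y) /\
  almost_breakable_subsemigroup op (fun y => ~ is_unit op e y).
Proof.
  split; [|split].
  - destruct (classic (exists u, is_unit op e u /\ u <> e)) as [(u0&Hu0&Hne0)|Hn].
    + exists e, u0. intros u Hu. destruct (classic (u = e)) as [|Hue]; auto. right.
      apply NNPP; intro Hne. apply (patT u u0); auto.
      * apply inv2; auto.
      * intro Hc. apply Hne0. apply (lcancel u); auto. now rewrite Hc, op_e_r.
      * intro Hc. apply Hne. rewrite <- (op_e_r u), <- (inv2 u0 Hu0 Hne0), op_assoc, Hc. now rewrite op_e_l.
    + exists e, e. intros u Hu. left. apply NNPP; intro Hne. apply Hn; eauto.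
  - intros u y Hu Hy. destruct (classic (u = e)) as [->|Hne]; [now rewrite op_e_l, op_e_r|].
    assert (Huu := inv2 u Hu Hne).
    assert (Hye := nu_ne y Hy).
    assert (Hyu : y <> u) by (intros ->; auto).
    split; apply NNPP; intro Hc.
    + apply (patT' y u); auto. intro Hc2. apply Hyu.
      rewrite <- (op_e_l y), <- Huu, <- op_assoc, Hc2. now rewrite op_e_r.
    + apply (patT y u); auto. intro Hc2. apply Hyu.
      rewrite <- (op_e_r y), <- Huu, op_assoc, Hc2. now rewrite op_e_l.
  - split.
    + intros x y; apply closure.
    + intros x y Hx Hy. apply NNPP; intro Hc.
      apply not_or_and in Hc as [Hc1 Hc2].
      apply not_or_and in Hc1 as [Hc3 Hc4]. apply not_or_and in Hc2 as [Hc5 Hc6].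
      assert (Hid : forall z, ~ is_unit op e z -> op z z = z).
      { intros z Hz. apply NNPP; intro Hn. apply (sq z); auto using nu_ne.
        intro Hzz. apply (closure z z Hz Hz). rewrite Hzz. apply unit_e. }
      destruct (classic (x = y)) as [<-|Hxy]; [now apply Hc3, Hid|].
      apply (patP5 x y); auto using nu_ne.
      * intro Hc. apply (closure x y Hx Hy). rewrite Hc. apply unit_e.
      * intro Hc. apply (closure y x Hy Hx). rewrite Hc. apply unit_e.
Qed.

End PS.

Theorem lemma3p5 (H : Type) (op : H -> H -> H) (e : H)
  (op_assoc : forall x y z, op x (op y z) = op (op x y) z)
  (op_e_l : forall x, op e x = x) (op_e_r : forall x, op x e = x) :
  UmF (Pfin1_mul op (op_e_l e)) (Pfin1_one e) ->
  (exists u1 u2 : H, forall u, is_unit op e u -> u = u1 \/ u = u2) /\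
  (forall u y, is_unit op e u -> ~ is_unit op e y -> op u y = y /\ op y u = y) /\
  almost_breakable_subsemigroup op (fun y => ~ is_unit op e y).
Proof.
  intros HU. exact (main H op e op_assoc op_e_l op_e_r HU).
Qed.
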